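(* Let $M=p_1^{n_1}\cdots p_K^{n_K}$ with distinct primes and $n_\nu\in\mathbb{N}$, and let $A\oplus B=\mathbb{Z}_M$. Fix distinct $i,j\in\{1,\dots,K\}$, let $z\in\mathbb{Z}_M$ and $\Lambda_{ij}=\Lambda(z,M/(p_ip_j))$. Suppose that $a_0*F_i\subset A$ for some $a_0\in\Sigma_A(\Lambda_{ij})$. Then $\Sigma_A(\Lambda_{ij})\subset\Pi(a_0,p_j^{n_j-1})$.
   Context: $A\oplus B=\mathbb{Z}_M$ means every element of $\mathbb{Z}_M$ is uniquely $a+b$ with $a\in A$, $b\in B$. For $d\mid M$, $\Lambda(x,d)=\{x'\in\mathbb{Z}_M: d\mid x-x'\}$, and $\Pi(x,p^\alpha)=\Lambda(x,p^\alpha)$. $F_i=\{0,M/p_i,\dots,(p_i-1)M/p_i\}$, $x*F_i=\{x+f:f\in F_i\}$. For $Z\subset\mathbb{Z}_M$, $\Sigma_A(Z)=\{a\in A:a+b\in Z\text{ for some }b\in B\}$. *)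

(* Defs.v *)
From mathcomp Require Import all_boot all_order all_algebra.
Set Implicit Arguments. Unset Strict Implicit. Unset Printing Implicit Defensive.
Import GRing.Theory.
Local Open Scope ring_scope.

(* Z_M is modelled by 'Z_M (valid since M >= 2 in all uses). *)

Definition tiling (M : nat) (A B : {set 'Z_M}) : Prop :=
  (forall c : 'Z_M, exists a b, [/\ a \in A, b \in B & c = a + b]) /\
  (forall a a' b b' : 'Z_M, a \in A -> a' \in A -> b \in B -> b' \in B ->
      a + b = a' + b' -> a = a' /\ b = b').

Definition Lambda (M : nat) (x : 'Z_M) (d : nat) : {set 'Z_M} :=
  [set x' : 'Z_M | (d %| nat_of_ord (x - x')%R)%N].

Definition Pi (M : nat) (x : 'Z_M) (p alpha : nat) : {set 'Z_M} :=
  Lambda x (p ^ alpha)%N.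

Definition Fset (M p : nat) : {set 'Z_M} :=
  [set ((k * (M %/ p))%N)%:R | k : 'I_p].

Definition shiftF (M p : nat) (x : 'Z_M) : {set 'Z_M} :=
  [set x + f | f in Fset M p].

Definition SigmaA (M : nat) (A B Z : {set 'Z_M}) : {set 'Z_M} :=
  [set a in A | [exists b in B, (a + b) \in Z]].

(* Main.v *)
From mathcomp Require Import all_boot all_order all_algebra.
From mathcomp Require Import zify ring.
Require Import Defs.
Set Implicit Arguments. Unset Strict Implicit. Unset Printing Implicit Defensive.
Import GRing.Theory.
Local Open Scope ring_scope.

Lemma sum_ge2 (I : finType) (P : pred I) (F : I -> nat) i j :
  P i -> P j -> i != j -> (0 < F i)%N -> (0 < F j)%N -> (2 <= \sum_(k | P k) F k)%N.
Proof.
move=> Pi Pj ij Fi Fj.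
rewrite (bigD1 i) //= (bigD1 j) /=; last by rewrite Pj eq_sym ij.
lia.
Qed.

Lemma sum_ge1 (I : finType) (P : pred I) (F : I -> nat) i :
  P i -> (0 < F i)%N -> (1 <= \sum_(k | P k) F k)%N.
Proof. by move=> Pi Fi; rewrite (bigD1 i) //=; lia. Qed.

Lemma all_one (T : finType) (F : T -> nat) :
  (forall x, 0 < F x)%N -> (\sum_x F x = #|T|)%N -> forall x, F x = 1%N.
Proof.
move=> pos S x.
have E : (\sum_x F x = \sum_x (F x - 1) + \sum_(x : T) 1)%N.
  rewrite -big_split; apply: eq_bigr => y _ /=; have := pos y; lia.
rewrite E sum1_card in S; move/eqP: S.
rewrite -{2}[#|T|]add0n eqn_add2r sum_nat_eq0 => /forallP/(_ x)/= /eqP.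
have := pos x; lia.
Qed.

Section Mx.
Variable M : nat.
Hypothesis M_gt1 : (1 < M)%N.
Variable p : nat.
Hypothesis p_pr : prime p.
Local Notation F := 'F_p.
Local Notation n := (Zp_trunc M).+2.

Definition E (g : 'Z_M) : 'M[F]_n := \matrix_(i, j) ((j == i + g)%:R).

Lemma E_mul g h : E g * E h = E (g + h).
Proof.
apply/matrixP => i j; rewrite !mxE.
rewrite (bigD1 (i + g)) //= big1 => [|k kig]; last by rewrite !mxE (negbTE kig) mul0r.
by rewrite !mxE eqxx mul1r addr0 addrA.
Qed.

Lemma E_comm g h : GRing.comm (E g) (E h).
Proof. by rewrite /GRing.comm !E_mul addrC. Qed.

Lemma E0 : E 0 = 1.
Proof. by apply/matrixP => i j; rewrite !mxE addr0 eq_sym. Qed.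

Lemma E_exp g k : E g ^+ k = E (g *+ k).
Proof.
elim: k => [|k IH]; first by rewrite expr0 mulr0n E0.
by rewrite exprS IH E_mul mulrS.
Qed.

Lemma pchar_mx : p \in [pchar 'M[F]_n].
Proof.
rewrite inE p_pr /=.
have -> : (p%:R : 'M[F]_n) = (p%:R : F)%:M by rewrite rmorph_nat.
by rewrite pchar_Fp_0 // raddf0.
Qed.


Lemma frob_sum (r : seq 'Z_M) (P : pred 'Z_M) :
  (\sum_(g <- r | P g) E g) ^+ p = \sum_(g <- r | P g) E g ^+ p.
Proof.
elim: r => [|g r IH]; first by rewrite !big_nil expr0n gtn_eqF ?prime_gt0.
rewrite !big_cons; case: (P g) => //.
rewrite -!(pFrobenius_autE pchar_mx) pFrobenius_autD_comm; last first.
  by apply: commr_sum => h _; exact: E_comm.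
by rewrite !pFrobenius_autE IH.
Qed.

Lemma sum_eq1 (T : finType) (c : T) : (\sum_(x : T) ((x == c) : nat) = 1)%N.
Proof.
rewrite (bigD1 c) //= eqxx big1 // => x /negbTE ->; by [].
Qed.

Lemma tiling_sum1 (A B : {set 'Z_M}) (c : 'Z_M) : tiling A B ->
  (\sum_(a in A) \sum_(b in B) ((c == (a + b)%R) : nat) = 1)%N.
Proof.
case=> [ex un]; have [a0 [b0 [a0A b0B ->]]] := ex c.
rewrite (bigD1 a0) //= (bigD1 b0) //= eqxx big1 => [|b /andP[bB bb0]]; last first.
  case: eqP => // /un [] // _ E; by rewrite E eqxx in bb0.
rewrite big1 // => a /andP[aA aa0]; apply: big1 => b bB.
case: eqP => // /un [] // E; by rewrite E eqxx in aa0.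
Qed.

Lemma tiling_card (A B : {set 'Z_M}) : tiling A B -> (#|A| * #|B| = M)%N.
Proof.
move=> T.
have H1 : (\sum_(c : 'Z_M) \sum_(a in A) \sum_(b in B) ((c == (a + b)%R) : nat) = M)%N.
  rewrite (eq_bigr (fun _ => 1%N)) => [|c _]; last exact: tiling_sum1.
  by rewrite sum1_card card_ord Zp_cast.
rewrite -[in RHS]H1 exchange_big /= -sum1_card big_distrl /=.
apply: eq_bigr => a aA; rewrite exchange_big /= mul1n -sum1_card.
by apply: eq_bigr => b bB; rewrite sum_eq1.
Qed.


Definition SA (A : {set 'Z_M}) := \sum_(a in A) E a.
Definition J := \sum_(x : 'Z_M) E x.

Lemma eq_shift (i j c : 'Z_M) : (j == i + c) = (c == j - i).
Proof. by rewrite [RHS]eq_sym subr_eq addrC. Qed.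

Lemma J_E g : J * E g = J.
Proof.
rewrite /J mulr_suml; under eq_bigr do rewrite E_mul.
by rewrite [RHS](reindex_inj (addIr g)).
Qed.

Lemma J_entry i j : J i j = 1.
Proof.
rewrite /J summxE; under eq_bigr do rewrite mxE eq_shift.
by rewrite -natr_sum sum_eq1.
Qed.

Lemma SASB A B : tiling A B -> SA A * SA B = J.
Proof.
move=> T; apply/matrixP => i j; rewrite J_entry /SA mulr_suml.
under eq_bigr do rewrite mulr_sumr.
rewrite summxE; under eq_bigr do rewrite summxE.
under eq_bigr do under eq_bigr do rewrite E_mul mxE eq_shift eq_sym.
under eq_bigr do rewrite -natr_sum.
by rewrite -natr_sum tiling_sum1.
Qed.

Lemma J_SB B k : J * SA B ^+ k = J *+ (#|B| ^ k).
Proof.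
elim: k => [|k IH]; first by rewrite expr0 mulr1 expn0.
rewrite exprSr mulrA IH mulrnAl /SA mulr_sumr.
under eq_bigr do rewrite J_E.
by rewrite sumr_const -mulrnA expnSr mulnC.
Qed.

Definition Ncnt (A B : {set 'Z_M}) (x : 'Z_M) :=
  (\sum_(a in A) \sum_(b in B) ((x == (a + p%:R * b)%R) : nat))%N.

Lemma Ncnt_entry A B x : (SA A * SA B ^+ p) 0 x = (Ncnt A B x)%:R.
Proof.
rewrite /SA frob_sum mulr_suml; under eq_bigr do rewrite mulr_sumr.
rewrite summxE; under eq_bigr do rewrite summxE.
under eq_bigr do under eq_bigr do rewrite E_exp E_mul mxE add0r.
rewrite /Ncnt natr_sum; apply: eq_bigr => a _; rewrite natr_sum; apply: eq_bigr => b _.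
by rewrite mulr_natl.
Qed.

Lemma Ncnt_gt0 (A B : {set 'Z_M}) x : tiling A B -> ~~ (p %| #|B|)%N -> (0 < Ncnt A B x)%N.
Proof.
move=> T pB.
have H : (Ncnt A B x)%:R = (#|B| ^ p.-1)%:R :> F.
  rewrite -Ncnt_entry.
  have -> : SA A * SA B ^+ p = SA A * SA B * SA B ^+ p.-1.
    by rewrite -mulrA -exprS prednK // prime_gt0.
  by rewrite SASB // J_SB mulmxnE J_entry.
rewrite lt0n; apply/negP => /eqP H0.
move: H; rewrite H0 => /(congr1 val); rewrite /= !val_Fp_nat // => /esym/eqP.
rewrite -/(dvdn _ _) Euclid_dvdX //; by rewrite (negbTE pB).
Qed.


Lemma Ncnt_sum (A B : {set 'Z_M}) : tiling A B -> (\sum_(x : 'Z_M) Ncnt A B x = M)%N.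
Proof.
move=> T; rewrite -[in RHS](tiling_card T) /Ncnt exchange_big /= -sum1_card big_distrl /=.
apply: eq_bigr => a aA; rewrite exchange_big /= mul1n -sum1_card.
by apply: eq_bigr => b bB; rewrite sum_eq1.
Qed.

Lemma tij_prime (A B : {set 'Z_M}) : tiling A B -> ~~ (p %| #|B|)%N ->
  tiling A [set p%:R * b | b in B].
Proof.
move=> T pB.
have one x : Ncnt A B x = 1%N.
  apply: (@all_one _ (Ncnt A B)) => [y|]; first exact: Ncnt_gt0.
  by rewrite Ncnt_sum // card_ord Zp_cast.
split.
  move=> c; have := Ncnt_gt0 c T pB; rewrite /Ncnt.
  case: (pickP [pred a | (a \in A) && (0 < \sum_(b in B) ((c == (a + p%:R * b)%R) : nat))%N]) => [a /andP[aA]|H]; last first.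
    rewrite big1 // => a aA; have := H a; rewrite /= aA /= lt0n => /negbFE/eqP //.
  case: (pickP [pred b | (b \in B) && (c == (a + p%:R * b)%R)]) => [b /andP[bB /eqP cE]|H]; last first.
    rewrite big1 // => b bB; have := H b; rewrite /= bB /=; by case: (_ == _).
  move=> _; exists a, (p%:R * b); split => //; exact: imset_f.
move=> a a' c c' aA a'A /imsetP[b bB ->] /imsetP[b' b'B ->] E.
set x := a + p%:R * b.
have h1 : (x == (a + p%:R * b)%R) by [].
have h2 : (x == (a' + p%:R * b')%R) by rewrite /x E.
have := one x; rewrite /Ncnt => Hx.
have [aa|aa] := eqVneq a a'.
  subst a'; split => //.
  have [->//|bb] := eqVneq b b'.
  have := @sum_ge2 _ (mem B) (fun b0 => ((x == (a + p%:R * b0)%R) : nat)) b b' bB b'B bb.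
  rewrite /= h1 h2 => /(_ isT isT) H2.
  have : (\sum_(b0 in B) ((x == (a + p%:R * b0)%R) : nat) <= 1)%N.
    rewrite -[X in (_ <= X)%N]Hx [X in (_ <= X)%N](bigD1 a) //=; exact: leq_addr.
  by rewrite leqNgt H2.
exfalso.
have := @sum_ge2 _ (mem A) (fun a0 => \sum_(b0 in B) ((x == (a0 + p%:R * b0)%R) : nat))%N a a' aA a'A aa.
rewrite Hx ltnn => H; apply: notF; apply: H.
  by apply: (@sum_ge1 _ (mem B) (fun b0 => ((x == (a + p%:R * b0)%R) : nat)) b) => //=; rewrite h1.
by apply: (@sum_ge1 _ (mem B) (fun b0 => ((x == (a' + p%:R * b0)%R) : nat)) b') => //=; rewrite h2.
Qed.

End Mx.

Lemma card_dvd (M : nat) (A B : {set 'Z_M}) : (1 < M)%N -> tiling A B -> (#|B| %| M)%N.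
Proof. by move=> M1 T; rewrite -[in X in (_ %| X)%N](tiling_card M1 T) dvdn_mull. Qed.

Lemma tij (M u : nat) (A B : {set 'Z_M}) : (1 < M)%N -> coprime u M -> tiling A B ->
  tiling A [set u%:R * b | b in B].
Proof.
move=> M1; elim/ltn_ind: u => u IH cu T.
case: u IH cu => [|[|u]] IH cu.
- by move: cu; rewrite /coprime gcd0n => /eqP E; rewrite E in M1.
- have -> : [set 1%:R * b | b in B] = B.
    by apply/setP => x; apply/imsetP/idP => [[y yB ->]|xB]; [rewrite mul1r | exists x => //; rewrite mul1r].
  exact: T.
set v := u.+2 in IH cu *.
have pp : prime (pdiv v) by rewrite pdiv_prime.
have pv : (pdiv v %| v)%N by rewrite pdiv_dvd.
have v0 : (0 < v)%N by [].
set p := pdiv v in pp pv.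
have Ev : v = (p * (v %/ p))%N by rewrite mulnC divnK.
have lt : (v %/ p < v)%N by rewrite ltn_Pdiv // prime_gt1.
have cu' : coprime (v %/ p) M by apply: coprime_dvdl cu; rewrite dvdn_div.
have cp : coprime p M by apply: coprime_dvdl cu.
have T' := IH _ lt cu' T.
have pB : ~~ (p %| #|[set ((v %/ p)%:R * b)%R | b in B]|)%N.
  apply/negP => H; move: cp; rewrite prime_coprime // => /negP; apply.
  exact: dvdn_trans H (card_dvd M1 T').
have := tij_prime M1 pp T' pB.
rewrite -imset_comp.
have -> : [set ((fun x : 'Z_M => p%:R * x) \o (fun b : 'Z_M => (v %/ p)%:R * b)) x | x in B] = [set v%:R * b | b in B].
  apply: eq_imset => x /=; by rewrite mulrA -natrM -Ev.
by [].
Qed.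
Lemma dvdn_modM (d m M : nat) : (d %| M -> (d %| m %% M) = (d %| m))%N.
Proof.
move=> dM; rewrite [in RHS](divn_eq m M) dvdn_addr //; exact: dvdn_mull.
Qed.

Lemma coprime_divg (m n : nat) : (0 < n)%N ->
  coprime (m %/ gcdn m n) (n %/ gcdn m n).
Proof.
move=> n0; set g := gcdn m n.
have g0 : (0 < g)%N by rewrite gcdn_gt0 n0 orbT.
rewrite /coprime -(eqn_pmul2l g0) muln_gcdr ![(g * _)%N]mulnC !divnK ?dvdn_gcdl ?dvdn_gcdr //.
by rewrite mul1n.
Qed.

Lemma lift_unit (k m M : nat) : (0 < M)%N -> (m %| M)%N -> coprime k m ->
  exists u, coprime u M /\ (u = k %[mod m])%N.
Proof.
move=> M0 mM ckm.
set t := (\prod_(q <- primes M | ~~ (q %| k)) q)%N.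
exists (t * m + k)%N; split; last by rewrite modnMDl.
set u := (t * m + k)%N.
set g := gcdn u M.
have g0 : (0 < g)%N by rewrite gcdn_gt0 M0 orbT.
rewrite /coprime -/g; apply/negPn/negP => g1.
have g2 : (1 < g)%N by lia.
have qp := pdiv_prime g2; set q := pdiv g in qp.
have qg : (q %| g)%N by exact: pdiv_dvd.
have qu : (q %| u)%N by apply: dvdn_trans qg (dvdn_gcdl _ _).
have qM : (q %| M)%N by apply: dvdn_trans qg (dvdn_gcdr _ _).
have qPM : q \in primes M by rewrite mem_primes qp M0 qM.
case qk: (q %| k)%N.
- have nqm : ~~ (q %| m)%N.
    apply/negP => qm; have : (q %| gcdn k m)%N by rewrite dvdn_gcd qk qm.
    by rewrite (eqP ckm) dvdn1 => /eqP q1; rewrite q1 in qp.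
  have nqt : ~~ (q %| t)%N.
    rewrite /t Euclid_dvd_prod // big_has_cond; apply/negP => /hasP [r rP] /andP[nrk qr].
    move: rP; rewrite mem_primes => /and3P[rp _ _].
    by move: qr; rewrite dvdn_prime2 // => /eqP qr; rewrite -qr qk in nrk.
  move: qu; rewrite /u dvdn_addl // Euclid_dvdM // (negbTE nqm) (negbTE nqt).
  by [].
- have qt : (q %| t)%N.
    rewrite /t Euclid_dvd_prod // big_has_cond; apply/hasP; exists q => //.
    by rewrite /= qk dvdnn.
  move: qu; rewrite /u dvdn_addr ?qk //; exact: dvdn_mulr.
Qed.

Section ZM.
Variable M : nat.
Hypothesis M1 : (1 < M)%N.

Lemma valZ (x : 'Z_M) : x = (nat_of_ord x)%:R.
Proof. by rewrite natr_Zp. Qed.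

Lemma val_ltM (x : 'Z_M) : (nat_of_ord x < M)%N.
Proof. have := ltn_ord x; by rewrite [in X in (_ < X)%N -> _]Zp_cast. Qed.

Lemma dvd_val_nat (d m : nat) : (d %| M)%N -> (d %| nat_of_ord (m%:R : 'Z_M))%N = (d %| m)%N.
Proof. by move=> dM; rewrite val_Zp_nat // dvdn_modM. Qed.

Lemma dvd_valD (d : nat) (x y : 'Z_M) : (d %| M)%N -> (d %| nat_of_ord x)%N -> (d %| nat_of_ord y)%N ->
  (d %| nat_of_ord (x + y)%R)%N.
Proof. by move=> dM hx hy; rewrite [x]valZ [y]valZ -natrD dvd_val_nat // dvdn_add. Qed.

Lemma oppZ (x : 'Z_M) : - x = (M - nat_of_ord x)%:R.
Proof.
rewrite natrB ?(ltnW (val_ltM x)) // -valZ.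
have -> : (M%:R : 'Z_M) = 0 by apply: val_inj; rewrite /= val_Zp_nat // modnn.
by rewrite sub0r.
Qed.

Lemma dvd_valN (d : nat) (x : 'Z_M) : (d %| M)%N -> (d %| nat_of_ord x)%N -> (d %| nat_of_ord (- x)%R)%N.
Proof. by move=> dM hx; rewrite oppZ dvd_val_nat // dvdn_sub. Qed.

Lemma dvd_valB (d : nat) (x y : 'Z_M) : (d %| M)%N -> (d %| nat_of_ord x)%N -> (d %| nat_of_ord y)%N ->
  (d %| nat_of_ord (x - y)%R)%N.
Proof. by move=> dM hx hy; apply: dvd_valD => //; apply: dvd_valN. Qed.

Lemma unit_mult (x y : 'Z_M) : gcdn (nat_of_ord x) M = gcdn (nat_of_ord y) M ->
  exists u, coprime u M /\ x = u%:R * y.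
Proof.
move=> gE.
have M0 : (0 < M)%N by lia.
set g := gcdn (nat_of_ord y) M.
have g0 : (0 < g)%N by rewrite gcdn_gt0 M0 orbT.
have gM : (g %| M)%N by exact: dvdn_gcdr.
have gy : (g %| nat_of_ord y)%N by exact: dvdn_gcdl.
have gx : (g %| nat_of_ord x)%N by rewrite /g -gE dvdn_gcdl.
set M' := (M %/ g)%N; set y' := (nat_of_ord y %/ g)%N; set x' := (nat_of_ord x %/ g)%N.
have cy : coprime y' M' by exact: coprime_divg.
have cx : coprime x' M' by rewrite /x' /M' /g -gE; exact: coprime_divg.
have EM : M = (g * M')%N by rewrite /M' mulnC divnK.
have Ey : nat_of_ord y = (g * y')%N by rewrite /y' mulnC divnK.
have Ex : nat_of_ord x = (g * x')%N by rewrite /x' mulnC divnK.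
case y0: (y' == 0)%N.
  have vy0 : nat_of_ord y = 0%N by rewrite Ey (eqP y0) muln0.
  have gMM : g = M by rewrite /g vy0 gcd0n.
  have Mx : (M %| nat_of_ord x)%N by rewrite -[in X in (X %| _)%N]gMM.
  have vx0 : nat_of_ord x = 0%N.
    apply/eqP; apply: contraTT (val_ltM x) => nz; rewrite -leqNgt.
    by apply: dvdn_leq => //; rewrite lt0n.
  exists 1%N; split; first exact: coprime1n.
  have -> : x = 0 by apply: val_inj.
  have -> : y = 0 by apply: val_inj.
  by rewrite mulr0.
have y0' : (0 < y')%N by rewrite lt0n y0.
case: (egcdnP M' y0') => km kn Hk _.
rewrite (eqP cy) in Hk.
set k := (km * x')%N.
have ckm : coprime km M'.
  rewrite /coprime -dvdn1.
  have h1 : (gcdn km M' %| km * y')%N by apply: dvdn_mulr; exact: dvdn_gcdl.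
  by move: h1; rewrite Hk dvdn_addr //; apply: dvdn_mull; exact: dvdn_gcdr.
have ck : coprime k M' by rewrite /k coprimeMl ckm cx.
have M'M : (M' %| M)%N by rewrite [in X in (_ %| X)%N]EM dvdn_mull.
have [u [cu Hu]] := lift_unit M0 M'M ck.
exists u; split => //.
rewrite [y]valZ -natrM; apply: val_inj; rewrite /= val_Zp_nat //.
rewrite -[LHS](modn_small (val_ltM x)).
rewrite Ex Ey [in LHS]EM [in RHS]EM mulnCA -!muln_modr; congr (g * _)%N.
apply/esym; rewrite -modnMml Hu modnMml.
have -> : (k * y' = x' * kn * M' + x')%N.
  by rewrite /k mulnAC mulnC Hk mulnDr muln1 mulnA.
by rewrite modnMDl.
Qed.
End ZM.

Lemma dvd_Mpj (M pj g : nat) : (0 < M)%N -> prime pj -> (g %| M)%N ->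
  ~~ (pj ^ logn pj M %| g)%N -> (g %| M %/ pj)%N.
Proof.
move=> M0 pp gM ng.
have g0 : (0 < g)%N by apply: dvdn_gt0 gM.
set h := (M %/ g)%N.
have EM : M = (g * h)%N by rewrite /h mulnC divnK.
have h0 : (0 < h)%N by move: M0; rewrite EM muln_gt0 => /andP[].
case ph: (pj %| h)%N.
  by rewrite EM -muln_divA // dvdn_mulr.
have lh : logn pj h = 0%N by apply: logn_coprime; rewrite prime_coprime // ph.
by move: ng; rewrite EM lognM // lh addn0 pfactor_dvdnn.
Qed.

Section ZM2.
Variable M : nat.
Hypothesis M1 : (1 < M)%N.

Lemma dvd_val_natB (d m n : nat) : (d %| M)%N -> (m = n %[mod d])%N ->
  (d %| nat_of_ord ((m%:R : 'Z_M) - n%:R)%R)%N.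
Proof.
move=> dM Emn.
rewrite (divn_eq m d) (divn_eq n d) Emn !natrD opprD addrACA subrr addr0.
by apply: dvd_valB => //; rewrite dvd_val_nat // dvdn_mull.
Qed.

Lemma gcd_half (pj : nat) (u v r : 'Z_M) : prime pj -> v = u + r ->
  (M %/ pj %| nat_of_ord r)%N -> ~~ (pj ^ logn pj M %| nat_of_ord u)%N ->
  (gcdn (nat_of_ord u) M %| gcdn (nat_of_ord v) M)%N.
Proof.
move=> pp -> hr hu.
set g := gcdn (nat_of_ord u) M.
have gM : (g %| M)%N by exact: dvdn_gcdr.
have gu : (g %| nat_of_ord u)%N by exact: dvdn_gcdl.
have ng : ~~ (pj ^ logn pj M %| g)%N.
  by apply: contra hu => h; apply: dvdn_trans h gu.
have gpj := dvd_Mpj (ltnW M1) pp gM ng.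
rewrite dvdn_gcd gM andbT; apply: dvd_valD => //.
exact: dvdn_trans gpj hr.
Qed.

Lemma gcd_eq (pj : nat) (u v r : 'Z_M) : prime pj -> (pj %| M)%N -> v = u + r ->
  (M %/ pj %| nat_of_ord r)%N -> ~~ (pj ^ logn pj M %| nat_of_ord u)%N ->
  ~~ (pj ^ logn pj M %| nat_of_ord v)%N ->
  gcdn (nat_of_ord u) M = gcdn (nat_of_ord v) M.
Proof.
move=> pp pjM' E hr hu hv; apply/eqP; rewrite eqn_dvd (gcd_half pp E) //=.
apply: (gcd_half (r := - r) pp); first by rewrite E addrK.
have pjM : (M %/ pj %| M)%N by rewrite -[in X in (_ %| X)%N](divnK pjM') dvdn_mulr.
  by apply: dvd_valN.
exact: hv.
Qed.

End ZM2.

Lemma sands (M : nat) (A B : {set 'Z_M}) (a a1 b b0 : 'Z_M) : (1 < M)%N -> tiling A B ->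
  a \in A -> a1 \in A -> b \in B -> b0 \in B ->
  gcdn (nat_of_ord (a - a1)) M = gcdn (nat_of_ord (b0 - b)) M -> a = a1.
Proof.
move=> M1 T aA a1A bB b0B /(unit_mult M1) [u [cu E]].
have [_ un] := tij M1 cu T.
have ub : u%:R * b \in [set u%:R * b | b in B] by apply: imset_f.
have ub0 : u%:R * b0 \in [set u%:R * b | b in B] by apply: imset_f.
suff H : a + u%:R * b = a1 + u%:R * b0 by case: (un _ _ _ _ aA a1A ub ub0 H).
apply/eqP; rewrite -subr_eq0.
have -> : a + u%:R * b - (a1 + u%:R * b0) = (a - a1) - u%:R * (b0 - b) by ring.
by rewrite E subrr.
Qed.

Theorem corollary7p2 (M pi pj : nat) (A B : {set 'Z_M}) (z a0 : 'Z_M) :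
  (0 < M)%N -> prime pi -> prime pj -> pi != pj ->
  (pi %| M)%N -> (pj %| M)%N ->
  tiling A B ->
  a0 \in SigmaA A B (Lambda z (M %/ (pi * pj))) ->
  shiftF pi a0 \subset A ->
  SigmaA A B (Lambda z (M %/ (pi * pj))) \subset Pi a0 pj (logn pj M).-1.
Proof.
move=> M0 pip pjp pij piM pjM T a0S shS.
have M1 : (1 < M)%N by apply: leq_trans (prime_gt1 pip) (dvdn_leq M0 piM).
have pi0 := prime_gt0 pip; have pj0 := prime_gt0 pjp.
have cij : coprime pi pj by rewrite prime_coprime // dvdn_prime2 // (negbTE pij).
have pijM : (pi * pj %| M)%N by rewrite Gauss_dvd // piM pjM.
set N := (M %/ (pi * pj))%N.
have EM : M = (N * pi * pj)%N by rewrite -mulnA /N divnK.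
have NM : (N %| M)%N by rewrite [in X in (_ %| X)%N]EM -mulnA dvdn_mulr.
have EMi : (M %/ pi = N * pj)%N by rewrite EM mulnAC mulnK.
have EMj : (M %/ pj = N * pi)%N by rewrite EM mulnK.
set nj := logn pj M.
have nj0 : (0 < nj)%N by rewrite /nj logn_gt0 mem_primes pjp M0 pjM.
set q := (pj ^ nj.-1)%N.
have qnj : (q %| pj ^ nj)%N by rewrite dvdn_exp2l // leq_pred.
have pjnjM : (pj ^ nj %| M)%N by exact: pfactor_dvdnn.
have qMi : (q %| M %/ pi)%N.
  apply: dvdn_trans qnj _.
  have : (pj ^ nj %| pi * (M %/ pi))%N by rewrite mulnC divnK.
  by rewrite Gauss_dvdr // coprimeXl // coprime_sym.
have qMj : (q %| M %/ pj)%N.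
  rewrite -(dvdn_pmul2l pj0) -expnS prednK // mulnC divnK //.
have MiM : (M %/ pi %| M)%N by rewrite -[in X in (_ %| X)%N](divnK piM) dvdn_mulr.
have qM : (q %| M)%N by exact: dvdn_trans qMi MiM.
have MjM : (M %/ pj %| M)%N by rewrite -[in X in (_ %| X)%N](divnK pjM) dvdn_mulr.
move: a0S; rewrite /SigmaA inE => /andP[a0A /existsP[b0 /andP[b0B]]].
rewrite /Lambda inE => h0.
apply/subsetP => a; rewrite inE => /andP[aA /existsP[b /andP[bB]]].
rewrite inE => h1.
rewrite /Pi /Lambda inE -/nj -/q.
apply/negPn/negP => nq.
set w := a + b - (a0 + b0).
have hw : (N %| nat_of_ord w)%N.
  have -> : w = (z - (a0 + b0)) - (z - (a + b)) by rewrite /w; ring.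
  exact: dvd_valB.
set t := (nat_of_ord w %/ N)%N.
have Ew : w = (t * N)%:R by rewrite /t divnK // -valZ.
set c := chinese pi pj t 0.
set k := ((c %/ pj) %% pi)%N.
have Hk : (k * pj = t %[mod pi])%N.
  rewrite /k modnMml divnK; first exact: chinese_modl.
  by rewrite /dvdn /c chinese_modr // mod0n.
set K : 'Z_M := (k * (M %/ pi))%:R.
have a1A : a0 + K \in A.
  apply: (subsetP shS); apply/imsetP; exists K => //.
  apply/imsetP; exists (Ordinal (ltn_pmod (c %/ pj) pi0)) => //.
set r := w - K.
have hr : (M %/ pj %| nat_of_ord r)%N.
  rewrite /r Ew /K; apply: dvd_val_natB => //.
  rewrite EMi EMj [(t * N)%N]mulnC [(k * (N * pj))%N]mulnCA.
  by rewrite -!muln_modr Hk.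
have hK : (q %| nat_of_ord K)%N by rewrite /K dvd_val_nat // dvdn_mull.
set x := b0 - b; set y := a - (a0 + K).
have Eyx : y = x + r by rewrite /y /x /r /w; ring.
have ny : ~~ (q %| nat_of_ord y)%N.
  apply: contra nq => hy.
  have -> : a0 - a = - (y + K) by rewrite /y; ring.
  by apply: dvd_valN => //; apply: dvd_valD.
have nx : ~~ (q %| nat_of_ord x)%N.
  apply: contra ny => hx; rewrite Eyx; apply: dvd_valD => //.
  exact: dvdn_trans qMj hr.
have ny' : ~~ (pj ^ nj %| nat_of_ord y)%N by apply: contra ny; apply: dvdn_trans.
have nx' : ~~ (pj ^ nj %| nat_of_ord x)%N by apply: contra nx; apply: dvdn_trans.
have G := gcd_eq M1 pjp pjM Eyx hr nx' ny'.
have Ea := sands M1 T aA a1A bB b0B (esym G).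
move: nq; rewrite Ea.
have -> : a0 - (a0 + K) = - K by ring.
by rewrite dvd_valN.
Qed.
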